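(* Let $G$ be a nice graph, $V_4$ the set of vertices of degree at least four in $G$, $\mathcal{P}$ a path partition of $G$, and $\mathcal{P}_4\subseteq\mathcal{P}$ the subfamily of paths that visit at least one vertex of $V_4$. Then $\mathcal{P}_4$ admits a terminal collection of size at most $16\cdot\mathsf{high}(G)$, where $\mathsf{high}(G)=\sum_{v\in V_4}\deg_G(v)$.
   Context: All graphs are finite, simple and undirected; subcubic means maximum degree at most $3$. A path partition of $G$ is a collection of pairwise edge-disjoint paths whose edge sets together cover $E(G)$. A pan cycle of $G$ is a cycle containing a unique vertex of degree $3$ in $G$, all other vertices of it having degree $2$ in $G$; a bull cycle is a cycle containing exactly two vertices of degree $3$ in $G$, all others having degree $2$ in $G$. $G$ is nice if it is connected, not subcubic, has no pan cycles, and all its bull cycles are triangles. $N_G[S]$ denotes the closed neighbourhood of $S$. For a family $\mathcal{Q}$ of edge-disjoint paths in $G$, a set $U\subseteq V(G)$ is a terminal collection for $\mathcal{Q}$ if (1) $N_G[V_4]\subseteq U$; (2) both endpoints of every $P\in\mathcal{Q}$ belong to $U$; (3) for all $u,v\in U$, if two distinct paths $P_1,P_2\in\mathcal{Q}$ both visit $u$ and $v$, then at least one of $P_1,P_2$ visits some other vertex $w\in U$ between $u$ and $v$. *)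

(* Defs.v *)
From mathcomp Require Import all_boot.
Set Implicit Arguments. Unset Strict Implicit. Unset Printing Implicit Defensive.

Section Graphs.
Variable T : finType.
Variable e : rel T.

Definition simple_graph := symmetric e /\ irreflexive e.

Definition deg (x : T) : nat := #|[set y | e x y]|.

Definition V4 : {set T} := [set v | 4 <= deg v].

Definition high : nat := \sum_(v in V4) deg v.

Definition connected_graph := forall x y : T, connect e x y.
Definition subcubic := forall v : T, deg v <= 3.

Definition is_cycle (c : seq T) : bool := [&& cycle e c, uniq c & 3 <= size c].

Definition num_deg3 (c : seq T) : nat := count (fun v => deg v == 3) c.
Definition others_deg2 (c : seq T) : bool :=
  all (fun v => (deg v == 2) || (deg v == 3)) c.

Definition pan_cycle (c : seq T) : bool :=
  [&& is_cycle c, num_deg3 c == 1 & others_deg2 c].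
Definition bull_cycle (c : seq T) : bool :=
  [&& is_cycle c, num_deg3 c == 2 & others_deg2 c].

Definition nice : Prop :=
  [/\ connected_graph, ~ subcubic,
      (forall c, ~~ pan_cycle c) &
      (forall c, bull_cycle c -> size c = 3)].

Definition is_gpath (p : seq T) : bool :=
  match p with
  | [::] => false
  | x :: s => [&& path e x s, uniq p & 1 <= size s]
  end.

Definition gedges : {set {set T}} :=
  [set E : {set T} | [exists x, exists y, e x y && (E == [set x; y])]].

Definition path_edges (p : seq T) : {set {set T}} :=
  [set E : {set T} | has (fun xy => E == [set xy.1; xy.2]) (zip p (behead p))].

Definition path_partition (P : seq (seq T)) : Prop :=
  [/\ (forall p, p \in P -> is_gpath p),
      (forall i j, i < size P -> j < size P -> i != j ->
         [disjoint path_edges (nth [::] P i) & path_edges (nth [::] P j)]) &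
      \bigcup_(p <- P) path_edges p = gedges].

Definition visits_V4 (p : seq T) : bool := has (fun v => v \in V4) p.

Definition closed_nbhd (S : {set T}) : {set T} :=
  [set x | [exists v, (v \in S) && ((x == v) || e v x)]].

Definition between (p : seq T) (u v w : T) : bool :=
  [&& w \in p, minn (index u p) (index v p) < index w p
             & index w p < maxn (index u p) (index v p)].

Definition endpoints_in (U : {set T}) (p : seq T) : bool :=
  match p with
  | [::] => true
  | x :: s => (x \in U) && (last x s \in U)
  end.

Definition terminal_collection (Q : seq (seq T)) (U : {set T}) : Prop :=
  [/\ closed_nbhd V4 \subset U,
      (forall p, p \in Q -> endpoints_in U p) &
      (forall u v, u \in U -> v \in U -> u != v ->
         forall i j, i < size Q -> j < size Q -> i != j ->
         let P1 := nth [::] Q i in let P2 := nth [::] Q j in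
         [&& u \in P1, v \in P1, u \in P2 & v \in P2] ->
         exists2 w, w \in U &
           [&& w != u, w != v & between P1 u v w || between P2 u v w])].
End Graphs.

(* Main.v *)
Require Import Defs.
From mathcomp Require Import all_boot zify.
Set Implicit Arguments. Unset Strict Implicit. Unset Printing Implicit Defensive.

Section Aux.
Variable T : finType.

Lemma card_bigcup_seq (I : Type) (r : seq I) (F : I -> {set T}) :
  #|\bigcup_(i <- r) F i| <= \sum_(i <- r) #|F i|.
Proof.
elim: r => [|i r IH]; first by rewrite !big_nil cards0.
rewrite !big_cons; apply: leq_trans (leq_card_setU _ _) _.
by rewrite leq_add2l.
Qed.

Lemma mem_zip_nth (x0 x : T) s i : i < size s ->
  (nth x0 (x::s) i, nth x0 s i) \in zip (x::s) s.
Proof.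
elim: s x i => [|y s IH] x [|i] //= Hi.
- by rewrite inE eqxx.
- by rewrite inE IH ?orbT.
Qed.

Variable e : rel T.
Hypothesis esym : symmetric e.

Lemma edge_at x s i : path e x s -> i < size s ->
  e (nth x (x::s) i) (nth x (x::s) i.+1) &&
  ([set nth x (x::s) i; nth x (x::s) i.+1] \in path_edges (x::s)).
Proof.
move=> /(pathP x) H lt; rewrite /= H // andTb inE.
apply/hasP; exists (nth x (x::s) i, nth x s i) => //.
exact: mem_zip_nth.
Qed.

Lemma neighbor_in p u : is_gpath e p -> u \in p ->
  exists y, e u y && ([set u; y] \in path_edges p).
Proof.
case: p => [|x s] //= /and3P [Hp Hu Hs] Hin.
have Hk : index u (x::s) < (size s).+1 by rewrite -[(size s).+1]/(size (x::s)) index_mem.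
have Hnu := nth_index x Hin.
case: (ltnP (index u (x::s)) (size s)) => Hlt.
  exists (nth x (x::s) (index u (x::s)).+1).
  by have := edge_at Hp Hlt; rewrite Hnu.
have Hk1 : index u (x :: s) = (index u (x::s)).-1.+1.
  by rewrite prednK //; apply: leq_trans Hlt.
have Hlt' : (index u (x::s)).-1 < size s.
  by rewrite -ltnS -Hk1.
exists (nth x (x::s) (index u (x::s)).-1).
have := edge_at Hp Hlt'; rewrite -Hk1 Hnu => /andP [H1 H2].
by rewrite esym H1 setUC.
Qed.

Lemma between_sym (p : seq T) (u v w : T) : between p u v w = between p v u w.
Proof. by rewrite /between minnC maxnC. Qed.

Lemma sep p u v : is_gpath e p -> u \in p -> v \in p -> u != v ->
  [set u; v] \in path_edges p \/
  exists w, [&& (e u w || e v w), w != u, w != v & between p u v w].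
Proof.
move=> Hg.
wlog: u v / index u p < index v p.
  move=> W Hu Hv Huv.
  case: (ltngtP (index u p) (index v p)) => H.
  - exact: W.
  - have Hvu : v != u by rewrite eq_sym.
    have [H1|[w Hw]] := W v u H Hv Hu Hvu.
    + by left; rewrite setUC.
    + right; exists w; move: Hw; rewrite between_sym.
      by case/and4P => [H1 H2 H3 H4]; rewrite H2 H3 H4 orbC H1.
  - by move: Huv; rewrite (index_inj u Hu Hv H) eqxx.
case: p Hg => [|x s] // Hg Hlt Hu Hv Huv.
have /and3P [Hp Hun Hs] := Hg.
set a := index u (x::s) in Hlt *; set b := index v (x::s) in Hlt *.
have Hb : b < (size s).+1 by rewrite -[(size s).+1]/(size (x::s)) index_mem.
have Ha : a < size s by apply: leq_trans Hlt _; rewrite -ltnS.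
have Hnu := nth_index x Hu; have Hnv := nth_index x Hv.
have /andP [He Hpe] := edge_at Hp Ha.
case: (eqVneq b a.+1) => Hba.
  by left; move: Hpe; rewrite -/a Hnu -Hba Hnv.
right; exists (nth x (x::s) a.+1).
have Hab : a.+1 < b by rewrite ltn_neqAle eq_sym Hba Hlt.
have Hi : index (nth x (x::s) a.+1) (x::s) = a.+1 by apply: index_uniq.
rewrite -/a Hnu in He; rewrite He orTb.
apply/and4P; split => //.
- rewrite -[in X in _ != X]Hnu (nth_uniq x _ _ Hun) //=.
  + by rewrite eqn_leq ltnn.
  + by rewrite ltnS ltnW.
- rewrite -[in X in _ != X]Hnv (nth_uniq x _ _ Hun) //=; first by rewrite eq_sym.
- rewrite /between Hi mem_nth /=; last by rewrite ltnS.
  by rewrite -/a -/b (minn_idPl (ltnW Hlt)) (maxn_idPr (ltnW Hlt)) ltnSn Hab.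
Qed.

Definition ends (p : seq T) : {set T} :=
  if p is x :: s then [set x; last x s] else set0.

Lemma interior p u : is_gpath e p -> u \in p -> u \notin ends p ->
  exists a b, [/\ a != b, e u a, e u b, [set u; a] \in path_edges p
                & [set u; b] \in path_edges p].
Proof.
case: p => [|x s] // Hg Hu.
have /and3P [Hp Hun Hs] := Hg.
rewrite /ends !inE negb_or => /andP [Hux Hul].
set k := index u (x::s).
have Hk : k < (size s).+1 by rewrite -[(size s).+1]/(size (x::s)) index_mem.
have Hnu : nth x (x::s) k = u := nth_index x Hu.
have Hk0 : k != 0 by apply: contraNneq Hux => H; rewrite -Hnu H.
have Hks : k != size s.
  apply: contraNneq Hul => H; rewrite -Hnu H.
  by rewrite -[size s]/(size (x::s)).-1 nth_last.
have Hlt : k < size s by rewrite ltn_neqAle Hks -ltnS.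
have Hk1 : k = k.-1.+1 by rewrite prednK // lt0n.
have Hlt' : k.-1 < size s by rewrite (leq_trans _ Hlt) // {2}Hk1.
have /andP [E1 P1] := edge_at Hp Hlt'.
have /andP [E2 P2] := edge_at Hp Hlt.
rewrite -Hk1 Hnu in E1 P1; rewrite Hnu in E2 P2.
exists (nth x (x::s) k.-1), (nth x (x::s) k.+1); split => //.
- rewrite (nth_uniq x _ _ Hun) //=.
  + lia.
  + by rewrite ltnS ltnW.
- by rewrite esym.
- by rewrite setUC.
Qed.

Lemma deg4 (P1 P2 : seq T) u a b c d :
  [disjoint path_edges P1 & path_edges P2] ->
  a != b -> c != d -> e u a -> e u b -> e u c -> e u d ->
  [set u; a] \in path_edges P1 -> [set u; b] \in path_edges P1 ->
  [set u; c] \in path_edges P2 -> [set u; d] \in path_edges P2 ->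
  4 <= deg e u.
Proof.
move=> Hdis Hab Hcd Ea Eb Ec Ed Pa Pb Pc Pd.
have Hne : forall y z, [set u; y] \in path_edges P1 -> [set u; z] \in path_edges P2 -> y != z.
  move=> y z Py Pz; apply/eqP => Hyz; subst z.
  by move: Hdis; rewrite disjoint_sym => /disjointFr/(_ Pz); rewrite Py.
have Hsub : [set a; b] :|: [set c; d] \subset [set y | e u y].
  by apply/subsetP => y; rewrite !inE => /orP [] /orP [] /eqP ->.
apply: leq_trans (subset_leq_card Hsub).
rewrite cardsU !cards2 Hab Hcd.
suff -> : [set a; b] :&: [set c; d] = set0 by rewrite cards0.
apply/setP => y; rewrite !inE.
apply/negP => /andP [/orP [] /eqP -> /orP [] /eqP H].
- by move: (Hne _ _ Pa Pc); rewrite H eqxx.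
- by move: (Hne _ _ Pa Pd); rewrite H eqxx.
- by move: (Hne _ _ Pb Pc); rewrite H eqxx.
- by move: (Hne _ _ Pb Pd); rewrite H eqxx.
Qed.

Lemma sub_bigcup_seq (I : eqType) (r : seq I) (F : I -> {set T}) i :
  i \in r -> F i \subset \bigcup_(j <- r) F j.
Proof.
elim: r => [|j r IH] //; rewrite inE big_cons => /orP [/eqP ->|H].
  exact: subsetUl.
exact: subset_trans (IH H) (subsetUr _ _).
Qed.

Lemma card_ends_seq (r : seq (seq T)) : #|\bigcup_(p <- r) ends p| <= (size r).*2.
Proof.
elim: r => [|p r IH]; first by rewrite big_nil cards0.
rewrite big_cons; apply: leq_trans (leq_card_setU _ _) _.
rewrite /= doubleS -addn2 addnC leq_add //.
case: p => [|x s] /=; first by rewrite cards0.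
by rewrite cards2; case: (x != last x s).
Qed.

Lemma card_cn (A : {set T}) : #|closed_nbhd e A| <= \sum_(s in A) (deg e s).+1.
Proof.
rewrite -big_enum.
have Hsub : closed_nbhd e A \subset \bigcup_(s <- enum A) (s |: [set y | e s y]).
  apply/subsetP => x; rewrite inE => /existsP [v /andP [Hv Hx]].
  have := sub_bigcup_seq (fun s => s |: [set y | e s y]) (_ : v \in enum A).
  move=> /(_ _)/subsetP; apply; first by rewrite mem_enum.
  by rewrite !inE.
apply: leq_trans (subset_leq_card Hsub) _.
apply: leq_trans (card_bigcup_seq _ _) _.
apply: leq_sum => s _; rewrite cardsU1; rewrite /deg.
by case: (s \in _).
Qed.

Lemma cn_sub (A B : {set T}) : A \subset B -> closed_nbhd e A \subset closed_nbhd e B.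
Proof.
move=> /subsetP H; apply/subsetP => x; rewrite !inE => /existsP [v /andP [Hv Hx]].
by apply/existsP; exists v; rewrite H.
Qed.

Lemma cn_U (A B : {set T}) : closed_nbhd e (A :|: B) \subset closed_nbhd e A :|: closed_nbhd e B.
Proof.
apply/subsetP => x; rewrite !inE => /existsP [v /andP [Hv Hx]].
move: Hv; rewrite inE => /orP [Hv|Hv].
  by rewrite orbC; apply/orP; right; apply/existsP; exists v; rewrite Hv.
by apply/orP; right; apply/existsP; exists v; rewrite Hv.
Qed.

Lemma cn_self (A : {set T}) x : x \in A -> x \in closed_nbhd e A.
Proof. by move=> H; rewrite inE; apply/existsP; exists x; rewrite H eqxx. Qed.

Lemma cn_nb (A : {set T}) x y : x \in A -> e x y -> y \in closed_nbhd e A.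
Proof. by move=> H H'; rewrite inE; apply/existsP; exists x; rewrite H H' orbT. Qed.

End Aux.

Theorem lemma13 (T : finType) (e : rel T) :
  simple_graph e -> nice e ->
  forall P : seq (seq T), path_partition e P ->
  exists U : {set T},
    terminal_collection e [seq p <- P | visits_V4 e p] U /\
    #|U| <= 16 * high e.
Proof.
move=> [esym eirr] _ P [HgP HdisP _].
set Q := [seq p <- P | visits_V4 e p].
have HgQ : forall p, p \in Q -> is_gpath e p.
  by move=> p; rewrite mem_filter => /andP [_ /HgP].
have Hedge : forall p, is_gpath e p -> exists E, E \in path_edges p.
  case=> [|x s] // Hg.
  have [y /andP [_ H]] := neighbor_in esym Hg (mem_head x s).
  by exists [set x; y].
have HuP : uniq P.
  case: (boolP (uniq P)) => // /(uniqPn [::]) [i [j [Hij Hj Heq]]]; exfalso.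
  have Hi : i < size P by apply: ltn_trans Hj.
  have := HdisP i j Hi Hj (negbT (ltn_eqF Hij)).
  rewrite Heq.
  have [E HE] := Hedge _ (HgP _ (mem_nth [::] Hj)).
  by move=> /disjointFr /(_ HE); rewrite HE.
have HuQ : uniq Q by apply: filter_uniq.
have HdisQ : forall p q, p \in Q -> q \in Q -> p != q ->
    [disjoint path_edges p & path_edges q].
  move=> p q; rewrite !mem_filter => /andP [_ Hp] /andP [_ Hq] Hpq.
  have := HdisP (index p P) (index q P); rewrite !index_mem Hp Hq !nth_index //.
  apply => //.
  by apply: contra Hpq => /eqP /(index_inj [::] Hp Hq) ->.
set EQ := \bigcup_(p <- Q) ends p.
set S := V4 e :|: (EQ :\: V4 e).
have HEQS : EQ \subset S.
  by apply/subsetP => x Hx; rewrite in_setU in_setD Hx andbT orbN.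
have HendsS : forall p, p \in Q -> ends p \subset S.
  move=> p Hp; apply: (subset_trans _ HEQS); rewrite /EQ.
  exact: (sub_bigcup_seq (@ends T) Hp).
have HinS : forall p1 p2 u, p1 \in Q -> p2 \in Q -> p1 != p2 ->
    u \in p1 -> u \in p2 -> u \in S.
  move=> p1 p2 u H1 H2 H12 Hu1 Hu2.
  case HV: (u \in V4 e); first by rewrite inE HV.
  case E1: (u \in ends p1); first by apply: (subsetP (HendsS _ H1)).
  case E2: (u \in ends p2); first by apply: (subsetP (HendsS _ H2)).
  have [a [b [Hab Ea Eb Pa Pb]]] := interior esym (HgQ _ H1) Hu1 (negbT E1).
  have [c [d [Hcd Ec Ed Pc Pd]]] := interior esym (HgQ _ H2) Hu2 (negbT E2).
  have := deg4 (HdisQ _ _ H1 H2 H12) Hab Hcd Ea Eb Ec Ed Pa Pb Pc Pd.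
  by move: HV; rewrite inE => ->.
exists (closed_nbhd e S); split.
  split.
  - by apply: cn_sub; exact: subsetUl.
  - move=> p Hp; case: p Hp => [|x s] // Hp /=.
    by rewrite !cn_self // (subsetP (HendsS _ Hp)) // !inE eqxx ?orbT.
  - move=> u v _ _ Huv i j Hi Hj Hij /=.
    set P1 := nth [::] Q i; set P2 := nth [::] Q j.
    move=> /and4P [Hu1 Hv1 Hu2 Hv2].
    have H1 : P1 \in Q by apply: mem_nth.
    have H2 : P2 \in Q by apply: mem_nth.
    have H12 : P1 != P2 by rewrite /P1 /P2 nth_uniq.
    have Su := HinS _ _ _ H1 H2 H12 Hu1 Hu2.
    have Sv := HinS _ _ _ H1 H2 H12 Hv1 Hv2.
    have Hw : forall w, (e u w || e v w) -> w \in closed_nbhd e S.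
      by move=> w /orP [] H; [apply: (cn_nb Su) | apply: (cn_nb Sv)].
    have [E1|[w /and4P [W1 W2 W3 W4]]] := sep (HgQ _ H1) Hu1 Hv1 Huv; last first.
      by exists w; rewrite ?Hw // W2 W3 W4.
    have [E2|[w /and4P [W1 W2 W3 W4]]] := sep (HgQ _ H2) Hu2 Hv2 Huv; last first.
      by exists w; rewrite ?Hw // W2 W3 W4 orbT.
    by move: (HdisQ _ _ H1 H2 H12) => /disjointFr /(_ E1); rewrite E2.
have C1 : #|closed_nbhd e S| <= #|closed_nbhd e (V4 e)| + #|closed_nbhd e (EQ :\: V4 e)|.
  exact: leq_trans (subset_leq_card (cn_U _ _ _)) (leq_card_setU _ _).
have C2 : #|closed_nbhd e (V4 e)| <= high e * 2.
  apply: leq_trans (card_cn _ _) _; rewrite /high big_distrl /=.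
  by apply: leq_sum => s; rewrite inE => H; lia.
have C3 : #|closed_nbhd e (EQ :\: V4 e)| <= #|EQ :\: V4 e| * 4.
  apply: leq_trans (card_cn _ _) _; rewrite -sum_nat_const.
  by apply: leq_sum => s; rewrite !inE => /andP [H _]; lia.
have C4 : #|EQ :\: V4 e| <= #|EQ| by apply: subset_leq_card; apply: subsetDl.
have C5 : #|EQ| <= (size Q).*2 := card_ends_seq Q.
have C6 : size Q <= high e.
  set Pairs := [set vy : T * T | (vy.1 \in V4 e) && e vy.1 vy.2].
  have CP : #|Pairs| <= high e.
    have Hsub : Pairs \subset \bigcup_(v <- enum (V4 e)) [set (v, y) | y in [set y | e v y]].
      apply/subsetP => [[v y]]; rewrite inE /= => /andP [Hv Hy].
      have := sub_bigcup_seq (fun v => [set (v, y) | y in [set y | e v y]]) (_ : v \in enum (V4 e)).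
      move=> /(_ _)/subsetP; apply; first by rewrite mem_enum.
      by apply/imsetP; exists y; rewrite ?inE.
    apply: leq_trans (subset_leq_card Hsub) _.
    apply: leq_trans (card_bigcup_seq _ _) _.
    rewrite /high -big_enum; apply: leq_sum => v _.
    exact: leq_imset_card.
  have Hex : forall p, p \in Q -> exists2 vy, vy \in Pairs & [set vy.1; vy.2] \in path_edges p.
    move=> p Hp; have := Hp; rewrite mem_filter => /andP [/hasP [v Hvp Hv] _].
    have [y /andP [Hy Hpe]] := neighbor_in esym (HgQ _ Hp) Hvp.
    by exists (v, y); rewrite // inE /= Hv Hy.
  case: (pickP (fun _ : T => true)) => [x0 _|T0]; last first.
    case HQ: Q => [|p Q'] //.
    have : p \in Q by rewrite HQ mem_head.
    by move=> /HgQ; case: p {HQ} => [|x s] //; have := T0 x.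
  pose f p := odflt (x0, x0) [pick vy in Pairs | [set vy.1; vy.2] \in path_edges p].
  have Hf : forall p, p \in Q -> (f p \in Pairs) && ([set (f p).1; (f p).2] \in path_edges p).
    move=> p Hp; rewrite /f; case: pickP => [vy /andP [H1 H2]|N] /=; first by rewrite H1 H2.
    have [vy H1 H2] := Hex p Hp.
    by move: (N vy); rewrite H1 H2.
  have Hinj : {in Q &, injective f}.
    move=> p q Hp Hq Hpq; apply/eqP; apply: contraT => Hne.
    have /andP [_ E1] := Hf p Hp; have /andP [_ E2] := Hf q Hq.
    rewrite Hpq in E1.
    by move: (HdisQ _ _ Hp Hq Hne) => /disjointFr /(_ E1); rewrite E2.
  have Hu : uniq (map f Q) by rewrite map_inj_in_uniq.
  rewrite -(size_map f) -(card_uniqP Hu).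
  apply: leq_trans CP; apply: subset_leq_card; apply/subsetP => z /mapP [p Hp ->].
  by case/andP: (Hf p Hp).
apply: leq_trans C1 _.
lia.
Qed.
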